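(* Let $n\ge 2$ and $\gamma_1,\dots,\gamma_n>0$. Let $A\in\mathbb{R}^{n\times n}$ be the matrix with $A_{ii}=-1$ for $i=1,\dots,n$, $A_{1n}=-\gamma_1$, $A_{i,i-1}=\gamma_i$ for $i=2,\dots,n$, and all other entries equal to $0$, i.e. $$A=\begin{bmatrix} -1 & 0 & \cdots & 0 & -\gamma_1\\ \gamma_2 & -1 & & & 0\\ 0&\gamma_3&-1&&\vdots\\ \vdots&&\ddots&\ddots&0\\ 0&\cdots&0&\gamma_n&-1\end{bmatrix}.$$ Then there exists a diagonal matrix $D$ with positive diagonal entries such that $DA+A^TD$ is negative definite if and only if $$\cos(\pi/n)\,(\gamma_1\gamma_2\cdots\gamma_n)^{1/n}<1,$$ which for $n\ge 3$ is equivalent to $\gamma_1\cdots\gamma_n<\sec(\pi/n)^n$ (and for $n=2$ holds for all positive $\gamma_1,\gamma_2$).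
   Context: A matrix $A$ is called diagonally stable if $DA+A^TD<0$ (negative definite) for some diagonal $D>0$. *)

(* Defs.v *)
From HB Require Import structures.
From mathcomp Require Import all_boot all_order all_algebra.
From mathcomp Require Import all_classical all_reals all_analysis.
Set Implicit Arguments. Unset Strict Implicit. Unset Printing Implicit Defensive.
Import Order.TTheory GRing.Theory Num.Theory.
Local Open Scope ring_scope.

(* The cyclic matrix of the statement, 0-indexed: row 0 has -gamma_0 in the
   last column, row i >= 1 has gamma_i in column i-1, diagonal is -1. *)
Definition cyc_mx (R : realType) (n : nat) (g : 'I_n -> R) : 'M[R]_n :=
  \matrix_(i, j) (if i == j then -1
                  else if ((i : nat) == 0%N) && ((j : nat) == n.-1) then - g i
                  else if (i : nat) == j.+1 then g i else 0).

Definition negdef (R : realType) (n : nat) (M : 'M[R]_n) : Prop :=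
  forall x : 'cV[R]_n, x != 0 -> (x^T *m M *m x) 0 0 < 0.

Definition diag_stable (R : realType) (n : nat) (A : 'M[R]_n) : Prop :=
  exists d : 'rV[R]_n, (forall i, 0 < d 0 i) /\
    negdef (diag_mx d *m A + A^T *m diag_mx d).

(* Main.v *)
Require Import Defs.
From HB Require Import structures.
From mathcomp Require Import all_boot all_order all_algebra.
From mathcomp Require Import all_classical all_reals all_analysis.
From mathcomp Require Import ring lra zify.
Import Order.TTheory GRing.Theory Num.Theory.
Local Open Scope ring_scope.

Section Aux.
Variable R : realType.

Lemma cassini (s : nat -> R) (c : R)
  (rec : forall k, s k.+2 = 2 * c * s k.+1 - s k) (s0 : s 0%N = 0) m :
  s m.+1 ^+ 2 - s m * s m.+2 = s 1%N ^+ 2.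
Proof.
elim: m => [|m IH]; first by rewrite s0 mul0r subr0.
rewrite -IH (rec m.+1) (rec m); ring.
Qed.

Lemma step_id (c a b e w ym ym1 z SY SC y0 : R) :
  b != 0 -> e != 0 -> e = 2 * c * b - a -> w ^+ 2 = b ^+ 2 - a * e ->
  (c * SY - SC + a / (2 * b) * (ym ^+ 2 + z ^+ 2) - w / b * (ym * z) + z * y0)
  + (e * ym - b * ym1 + w * z) ^+ 2 / (2 * (b * e))
  = c * (SY + ym ^+ 2) - (SC + ym * ym1) + b / (2 * e) * (ym1 ^+ 2 + z ^+ 2)
    - w / e * (ym1 * z) + z * y0.
Proof.
move=> hb he he' hw.
transitivity (c * (SY + ym ^+ 2) - (SC + ym * ym1) + b / (2 * e) * (ym1 ^+ 2 + z ^+ 2)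
    - w / e * (ym1 * z) + z * y0 + (w ^+ 2 - (b ^+ 2 - a * e)) * z ^+ 2 / (2 * (b * e))).
  rewrite he'; field.
  by apply/andP; split => //; rewrite -he'.
by rewrite hw subrr mul0r mul0r addr0.
Qed.

Lemma chol (s y : nat -> R) (c z : R)
  (rec : forall k, s k.+2 = 2 * c * s k.+1 - s k) (s0 : s 0%N = 0) m :
  (forall k, (k <= m)%N -> s k.+1 != 0) ->
  \sum_(k < m) (s k.+2 * y k - s k.+1 * y k.+1 + s 1%N * z) ^+ 2
       / (2 * (s k.+1 * s k.+2))
  = c * \sum_(k < m) y k ^+ 2 - \sum_(k < m) y k * y k.+1
    + s m / (2 * s m.+1) * (y m ^+ 2 + z ^+ 2) - s 1%N / s m.+1 * (y m * z)
    + z * y 0%N.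
Proof.
elim: m => [|m IH] hs.
  rewrite !big_ord0 s0; field; exact: hs.
rewrite !big_ord_recr /= IH; last by move=> k hk; apply: hs; exact: leqW.
apply: step_id.
- exact: hs.
- exact: hs.
- exact: rec.
- by rewrite (cassini _ _ rec s0).
Qed.

Lemma key (s y : nat -> R) (c : R)
  (rec : forall k, s k.+2 = 2 * c * s k.+1 - s k) (s0 : s 0%N = 0) p :
  (forall k, (0 < k < p.+2)%N -> 0 < s k) -> s p.+2 = 0 ->
  \sum_(i < p.+1) y i * y i.+1 - y 0%N * y p.+1 <= c * \sum_(i < p.+2) y i ^+ 2.
Proof.
move=> hpos hsn.
have hs : forall k, (k <= p)%N -> s k.+1 != 0.
  by move=> k hk; rewrite gt_eqF // hpos.
have := @chol s y c (y p.+1) rec s0 p hs.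
have ge0 : 0 <= \sum_(k < p) (s k.+2 * y k - s k.+1 * y k.+1 + s 1%N * y p.+1) ^+ 2
       / (2 * (s k.+1 * s k.+2)).
  apply: sumr_ge0 => k _; apply: divr_ge0; first exact: sqr_ge0.
  apply: mulr_ge0 => //; apply: mulr_ge0; apply: ltW; apply: hpos.
    by move: (ltn_ord k); lia.
  by move: (ltn_ord k); lia.
move=> eq; rewrite eq in ge0.
have b0 : 0 < s p.+1 by apply: hpos; lia.
have w0 : 0 < s 1%N by apply: hpos.
have ha : s p = 2 * c * s p.+1.
  by move: (rec p); rewrite hsn => /eqP; rewrite eq_sym subr_eq0 => /eqP.
have hw : s 1%N = s p.+1.
  have := cassini _ _ rec s0 p; rewrite hsn mulr0 subr0 => /eqP.
  rewrite -subr_eq0 subr_sqr mulf_eq0 => /orP [/eqP|/eqP h]; first by move=> h; apply/eqP; rewrite eq_sym -subr_eq0 h.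
  by exfalso; move: h; apply/eqP; rewrite gt_eqF // addr_gt0.
move: ge0; rewrite ha hw divff ?gt_eqF // mul1r.
rewrite (_ : 2 * c * s p.+1 / (2 * s p.+1) = c); last by field; rewrite gt_eqF.
rewrite 2!big_ord_recr /= big_ord_recr /=.
move=> h; lra.
Qed.
Lemma Ax (p : nat) (G X : nat -> R) (i : 'I_p.+2) :
  (cyc_mx (fun j : 'I_p.+2 => G j) *m \col_(j < p.+2) X j) i 0 =
  - X i + (if (i : nat) == 0%N then - G 0%N * X p.+1 else G i * X i.-1).
Proof.
rewrite !mxE (bigD1 i) //= !mxE eqxx mulN1r; congr (_ + _).
case: i => [[|k] hk] /=.
  rewrite (bigD1 ord_max) //=.
  rewrite !mxE /= eqxx /= big1 ?addr0 //.
  move=> j /andP [hj1 hj2]; rewrite !mxE.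
  have -> : (Ordinal hk == j) = false by apply/negbTE; rewrite eq_sym.
  have -> : ((j : nat) == p.+1) = false.
    apply/negbTE; apply: contra hj2 => /eqP h; apply/eqP; apply: val_inj => /=; exact: h.
  by rewrite /= mul0r.
have hk' : (k < p.+2)%N by lia.
rewrite (bigD1 (Ordinal hk')) /=; last by apply/eqP => /(congr1 val) /= /eqP; lia.
rewrite !mxE /=.
have -> : (Ordinal hk == Ordinal hk') = false by apply/negbTE/eqP => /(congr1 val) /= /eqP; lia.
rewrite eqxx big1 ?addr0 //.
move=> j /andP [hj1 hj2]; rewrite !mxE.
have -> : (Ordinal hk == j) = false by apply/negbTE; rewrite eq_sym.
have -> : (k.+1 == (j : nat).+1) = false.
  apply/negbTE; apply: contra hj2 => /eqP [h]; apply/eqP; apply: val_inj => /=; exact/esym.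
by rewrite /= mul0r.
Qed.


Definition qform (p : nat) (D G X : nat -> R) : R :=
  let x : 'cV[R]_p.+2 := \col_(i < p.+2) X i in
  let d : 'rV[R]_p.+2 := \row_(i < p.+2) D i in
  let A := cyc_mx (fun i : 'I_p.+2 => G i) in
  (x^T *m (diag_mx d *m A + A^T *m diag_mx d) *m x) 0 0.

Definition Eform (p : nat) (D G X : nat -> R) : R :=
  - \sum_(i < p.+2) D i * X i ^+ 2
       + \sum_(i < p.+1) D i.+1 * G i.+1 * X i.+1 * X i
       - D 0%N * G 0%N * X 0%N * X p.+1.

Lemma form (p : nat) (D G X : nat -> R) : qform p D G X = 2 * Eform p D G X.
Proof.
rewrite /qform /Eform.
set x := \col_(i < p.+2) X i. set d := \row_(i < p.+2) D i. set A := cyc_mx _.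
rewrite mulmxDr mulmxDl.
have -> : (x^T *m (A^T *m diag_mx d) *m x) = (x^T *m (diag_mx d *m A) *m x)^T.
  by rewrite !trmx_mul !trmxK tr_diag_mx !mulmxA.
have -> : forall M : 'M[R]_1, (M + M^T) 0 0 = 2 * M 0 0.
  by move=> M; rewrite [(M + _) 0 0]mxE [M^T _ _]mxE mulr_natl mulr2n.
congr (_ * _).
rewrite mulmxA mul_mx_diag -mulmxA mxE.
rewrite (eq_bigr (fun i : 'I_p.+2 => X i * D i * (- X i + (if (i : nat) == 0%N then - G 0%N * X p.+1 else G i * X i.-1)))); last first.
  by move=> i _; rewrite Ax !mxE.
rewrite (eq_bigr (fun i : 'I_p.+2 => - (D i * X i ^+ 2) + X i * D i * (if (i : nat) == 0%N then - G 0%N * X p.+1 else G i * X i.-1))); last by move=> i _; ring.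
rewrite big_split /= sumrN [\sum_(i < p.+2) (X i * D i * _)]big_ord_recl /=.
rewrite (eq_bigr (fun i : 'I_p.+1 => D i.+1 * G i.+1 * X i.+1 * X i)); last first.
  by move=> i _; rewrite /bump /= add1n; ring.
ring.
Qed.

Fixpoint rho (G : nat -> R) (c : R) (k : nat) : R :=
  if k is k'.+1 then rho G c k' * G k / c else 1.

Lemma negdef_le n (M : 'M[R]_n) : negdef M -> forall x : 'cV[R]_n, (x^T *m M *m x) 0 0 <= 0.
Proof.
move=> h x; have [->|/h /ltW //] := eqVneq x 0.
by rewrite mulmx0 mxE.
Qed.

Lemma trig_rec (t : R) k :
  sin (k.+2%:R * t) = 2 * cos t * sin (k.+1%:R * t) - sin (k%:R * t).
Proof.
have e1 : k.+2%:R * t = k.+1%:R * t + t by rewrite -natr1 mulrDl mul1r.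
have e2 : k%:R * t = k.+1%:R * t - t by rewrite -natr1 mulrDl mul1r addrK.
rewrite e1 e2 sinD sinB; ring.
Qed.

End Aux.

Theorem theorem1 (R : realType) (n : nat) (hn : (2 <= n)%N)
    (g : 'I_n -> R) (hg : forall i, 0 < g i) :
  (diag_stable (cyc_mx g) <->
     cos (pi / n%:R) * powR (\prod_i g i) (n%:R^-1) < 1)
  /\ ((3 <= n)%N ->
      (cos (pi / n%:R) * powR (\prod_i g i) (n%:R^-1) < 1 <->
       \prod_i g i < (cos (pi / n%:R))^-1 ^+ n))
  /\ (n = 2%N -> cos (pi / n%:R) * powR (\prod_i g i) (n%:R^-1) < 1).
Proof.
case: n hn g hg => [|[|p]] // hn g hg.
set t := pi / p.+2%:R.
pose G k := g (inord k).
have gE : g = (fun i : 'I_p.+2 => G i) by apply/funext => i; rewrite /G inord_val.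
have Gpos : forall k, 0 < G k by move=> k; exact: hg.
set P := \prod_i g i.
have PE : P = \prod_(i < p.+2) G i by rewrite /P gE.
have P0 : 0 < P by rewrite PE; apply: prodr_gt0 => i _; exact: Gpos.
set c := powR P (p.+2%:R^-1).
have c0 : 0 < c by apply: powR_gt0.
have cn : c ^+ p.+2 = P.
  by rewrite -powR_mulrn ?ltW // -powRrM mulVf ?powRr1 ?ltW // pnatr_eq0.
have n0 : (p.+2%:R : R) != 0 by rewrite pnatr_eq0.
have t0 : 0 < t by rewrite divr_gt0 ?pi_gt0 // ltr0n.
have tn : p.+2%:R * t = pi by rewrite /t mulrC -mulrA mulVf ?mulr1.
split; last split; last first.
  by move=> [hp]; rewrite /t hp cos_pihalf mul0r ltr01.
  move=> h3.
  have ct0 : 0 < cos t.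
    apply: cos_gt0_pihalf; apply/andP; split.
      by have := pi_gt0 R; lra.
    rewrite /t ltr_pM2l ?pi_gt0 // ltf_pV2 ?posrE ?ltr0n // ltr_nat; lia.
  rewrite -cn -(ltr_pdivlMl _ _ ct0) mulr1.
  by rewrite ltr_pXn2r // nnegrE ?invr_ge0 ltW.
pose r := rho R G c.
have c0' : c != 0 by rewrite gt_eqF.
have rpos : forall k, 0 < r k.
  by elim=> [|k IH] /=; [exact: ltr01 | rewrite divr_gt0 // mulr_gt0].
have rS : forall k, r k.+1 = r k * G k.+1 / c by [].
have rprod : forall k, r k * c ^+ k = \prod_(i < k) G i.+1.
  elim=> [|k IH]; first by rewrite big_ord0 /= mulr1.
  by rewrite big_ord_recr /= -IH rS exprS; field.
have hG0 : G 0%N * r p.+1 = c.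
  have e : G 0%N * r p.+1 * c ^+ p.+1 = c * c ^+ p.+1.
    by rewrite -mulrA rprod -exprS cn PE [in RHS]big_ord_recl.
  exact: (mulIf (expf_neq0 _ c0') e).
have hG0' : G 0%N = c / r p.+1.
  by rewrite -hG0 mulfK // gt_eqF.
have rec : forall k, sin (k.+2%:R * t) = 2 * cos t * sin (k.+1%:R * t) - sin (k%:R * t).
  by move=> k; exact: trig_rec.
have s0 : sin ((0%N)%:R * t) = 0 by rewrite mulr0n mul0r sin0.
have spos : forall k, (0 < k < p.+2)%N -> 0 < sin (k%:R * t).
  move=> k /andP [k1 k2]; apply: sin_gt0_pi; apply/andP; split.
    by rewrite mulr_gt0 // ltr0n.
  by rewrite -tn ltr_pM2r // ltr_nat.
have sn : sin (p.+2%:R * t) = 0 by rewrite tn sinpi.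
have cr : forall k : nat, cos (k.+1%:R * t) * cos (k%:R * t) + sin (k.+1%:R * t) * sin (k%:R * t) = cos t.
  move=> k; rewrite -cosB; congr cos; rewrite -natr1 mulrDl mul1r; ring.
have cend : cos ((0%N)%:R * t) * cos (p.+1%:R * t) + sin ((0%N)%:R * t) * sin (p.+1%:R * t) = - cos t.
  have -> : p.+1%:R * t = pi - t by rewrite -tn -[p.+2]addn1 natrD; ring.
  by rewrite mulr0n mul0r cos0 sin0 mul1r mul0r addr0 cosB cospi sinpi mul0r addr0 mulN1r.
rewrite gE; split.
  case=> d [dpos hneg].
  pose D k := d 0 (inord k).
  have dE : d = \row_(i < p.+2) D i.
    by apply/rowP => i; rewrite mxE /D inord_val.
  have Dpos : forall k, 0 < D k by move=> k; exact: dpos.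
  rewrite dE in hneg.
  pose Xc k := r k * cos (k%:R * t).
  pose Xs k := r k * sin (k%:R * t).
  have Hc : qform R p D G Xc < 0.
    apply: hneg; apply/negP => /eqP h.
    have := congr1 (fun M : 'cV[R]_p.+2 => M ord0 0) h.
    rewrite !mxE /Xc /= mulr0n mul0r cos0 mulr1 => /eqP.
    by rewrite oner_eq0.
  have Hs : qform R p D G Xs <= 0 by exact: negdef_le hneg _.
  rewrite !form in Hc Hs.
  have eA : \sum_(i < p.+2) D i * Xc i ^+ 2 + \sum_(i < p.+2) D i * Xs i ^+ 2
      = D 0%N + \sum_(i < p.+1) D i.+1 * r i.+1 ^+ 2.
    rewrite -big_split big_ord_recl /=; congr (_ + _).
      rewrite /Xc /Xs /= mulr0n mul0r cos0 sin0 !mul1r expr1n expr0n /= mulr0 addr0; ring.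
    apply: eq_bigr => i _; rewrite /Xc /Xs /bump /= add1n.
    by rewrite !exprMn -mulrDr -mulrDr cos2Dsin2 mulr1.
  have eB : \sum_(i < p.+1) D i.+1 * G i.+1 * Xc i.+1 * Xc i
      + \sum_(i < p.+1) D i.+1 * G i.+1 * Xs i.+1 * Xs i
      = cos t * c * \sum_(i < p.+1) D i.+1 * r i.+1 ^+ 2.
    rewrite -big_split mulr_sumr; apply: eq_bigr => i _ /=.
    by rewrite /Xc /Xs -(cr i) rS; field.
  have eC : D 0%N * G 0%N * Xc 0%N * Xc p.+1 + D 0%N * G 0%N * Xs 0%N * Xs p.+1
      = - (cos t * c * D 0%N).
    rewrite /Xc /Xs hG0' /=.
    transitivity (D 0%N * c * (cos ((0%N)%:R * t) * cos (p.+1%:R * t) + sin ((0%N)%:R * t) * sin (p.+1%:R * t))).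
      have r0 : r 0%N = 1 by [].
      rewrite r0; field; rewrite gt_eqF //.
    by rewrite cend; ring.
  have Spos : 0 < D 0%N + \sum_(i < p.+1) D i.+1 * r i.+1 ^+ 2.
    have h1 := Dpos 0%N.
    have h2 : 0 <= \sum_(i < p.+1) D i.+1 * r i.+1 ^+ 2.
      by apply: sumr_ge0 => j _; apply: mulr_ge0; [exact: ltW | exact: sqr_ge0].
    lra.
  move: Hc Hs; rewrite /Eform => Hc Hs.
  set S' := \sum_(i < p.+1) D i.+1 * r i.+1 ^+ 2 in eA eB Spos.
  set K := cos t * c in eB eC.
  have : 0 < (1 - K) * (D 0%N + S').
    rewrite mulrBl mul1r mulrDr.
    lra.
  by rewrite pmulr_lgt0 // subr_gt0.
move=> hlt.
pose D k := (r k ^+ 2)^-1.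
exists (\row_(i < p.+2) D i); split.
  by move=> i; rewrite mxE invr_gt0 exprn_gt0.
move=> x xn0.
pose X k := x (inord k) 0.
have xE : x = \col_(i < p.+2) X i.
  by apply/colP => i; rewrite mxE /X inord_val.
rewrite xE.
change (qform R p D G X < 0).
rewrite form /Eform.
pose Y k := X k / r k.
have r0 : r 0%N = 1 by [].
have rn0 : forall k, r k != 0 by move=> k; rewrite gt_eqF.
have eA : \sum_(i < p.+2) D i * X i ^+ 2 = \sum_(i < p.+2) Y i ^+ 2.
  by apply: eq_bigr => i _; rewrite /D /Y; field.
have eB : \sum_(i < p.+1) D i.+1 * G i.+1 * X i.+1 * X i
    = c * \sum_(i < p.+1) Y i * Y i.+1.
  rewrite mulr_sumr; apply: eq_bigr => i _; rewrite /D /Y rS.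
  by field; rewrite ?rn0 ?gt_eqF.
have eC : D 0%N * G 0%N * X 0%N * X p.+1 = c * (Y 0%N * Y p.+1).
  rewrite /D /Y hG0' r0.
  by field; rewrite ?rn0 ?gt_eqF.
have hkey := @key R (fun k => sin (k%:R * t)) Y (cos t) rec s0 p spos sn.
have SYpos : 0 < \sum_(i < p.+2) Y i ^+ 2.
  rewrite lt_def sumr_ge0 ?andbT; last by move=> i _; exact: sqr_ge0.
  apply/negP => /eqP /psumr_eq0P H.
  apply: (negP xn0); apply/eqP/colP => i; rewrite mxE.
  have := H (fun j _ => sqr_ge0 _) i isT => /eqP; rewrite sqrf_eq0 mulf_eq0 invr_eq0 => /orP [/eqP|/eqP h].
    by rewrite /X inord_val.
  by move: (rn0 i); rewrite h eqxx.
rewrite eA eB eC.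
set SY := \sum_(i < p.+2) Y i ^+ 2 in hkey SYpos *.
set K := \sum_(i < p.+1) Y i * Y i.+1 in hkey *.
have h1 : c * (K - Y 0%N * Y p.+1) <= c * (cos t * SY).
  by rewrite ler_wpM2l // ltW.
have h2 : c * (cos t * SY) < SY.
  by rewrite mulrA [c * _]mulrC -[X in _ < X]mul1r ltr_pM2r.
rewrite mulrBr in h1.
lra.
Qed.
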